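(* Let $(X,\mathcal{B},\mu,f)$ be a measure preserving system and $\{E_{\rho_n}\}_{n\ge1}$ a sequence of measurable subsets of $X$; put $E^k_{\rho_n}=f^{-k}E_{\rho_n}$. Fix $r\in\mathbb{Z}_+$ and let $H_r=\bigcap_{m\ge1}\bigcup_{n\ge m}\{x:\#\{1\le k\le n:x\in E^k_{\rho_n}\}\ge r\}$. If $E_{\rho_{n_1}}\subset E_{\rho_{n_2}}$ whenever $n_1\ge n_2$, and $\lim_{n\to\infty}\mu(E_{\rho_n})=0$, then $\mu(H_r\,\Delta\, f^{-1}H_r)=0$. *)

(* Defs.v *)
From HB Require Import structures.
From mathcomp Require Import all_boot all_order all_algebra.
From mathcomp Require Import all_classical all_reals all_analysis.
Set Implicit Arguments. Unset Strict Implicit. Unset Printing Implicit Defensive.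
Import Order.TTheory GRing.Theory Num.Theory.
Local Open Scope classical_set_scope.

Definition hit_count (T : Type) (f : T -> T) (E : nat -> set T) (n : nat) (x : T) : nat :=
  (\sum_(1 <= k < n.+1) (asbool (E n (iter k f x)) : nat))%N.

Definition H_set (T : Type) (f : T -> T) (E : nat -> set T) (r : nat) : set T :=
  \bigcap_(m in [set m : nat | (1 <= m)%N])
    \bigcup_(n in [set n : nat | (m <= n)%N]) [set x | (r <= hit_count f E n x)%N].

Definition symdiff (T : Type) (A B : set T) : set T := (A `\` B) `|` (B `\` A).

(* Main.v *)
Require Import Defs.
From HB Require Import structures.
From mathcomp Require Import all_boot all_order all_algebra.
From mathcomp Require Import all_classical all_reals all_analysis.
Import Order.TTheory GRing.Theory Num.Theory.
Local Open Scope classical_set_scope.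
Lemma count_meas d (T : measurableType d) (s : seq nat) (P : nat -> set T) :
  (forall k, k \in s -> measurable (P k)) -> forall r : nat,
  measurable [set x | (r <= \sum_(k <- s) (asbool (P k x) : nat))%N].
Proof.
elim: s => [|a s IH] Hm r.
  case: r => [|r].
    by rewrite (_ : [set x | _] = setT) //; apply/seteqP; split.
  by rewrite (_ : [set x | _] = set0) //; apply/seteqP; split => x //=; rewrite big_nil.
have mA : measurable (P a) by apply: Hm; rewrite mem_head.
have IH' : forall r, measurable [set x | (r <= \sum_(k <- s) (asbool (P k x) : nat))%N].
  by apply: IH => k ks; apply: Hm; rewrite in_cons ks orbT.
rewrite (_ : [set x | _] = (P a `&` [set x | (r.-1 <= \sum_(k <- s) (asbool (P k x) : nat))%N])
   `|` (~` P a `&` [set x | (r <= \sum_(k <- s) (asbool (P k x) : nat))%N])).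
  apply: measurableU; apply: measurableI => //; exact: measurableC.
apply/seteqP; split => x /=; rewrite big_cons.
  case: (asboolP (P a x)) => Ha /= H; [left|right]; split => //.
  by move: H; case: r => //= r; rewrite add1n ltnS.
case=> -[Ha H]; case: (asboolP (P a x)) => // _.
by move: H; case: r => //= r; rewrite add1n ltnS.
Qed.

Local Open Scope ring_scope.

Theorem proposition2p10 (d : measure_display) (T : measurableType d) (R : realType)
  (mu : probability T R) (f : T -> T)
  (f_meas : measurable_fun setT f)
  (f_pres : forall A : set T, measurable A -> mu (f @^-1` A) = mu A)
  (E : nat -> set T)
  (E_meas : forall n : nat, (1 <= n)%N -> measurable (E n))
  (r : nat)
  (E_decr : forall n1 n2 : nat, (1 <= n2)%N -> (n2 <= n1)%N -> E n1 `<=` E n2)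
  (E_lim : (fun n => mu (E n)) @ \oo --> 0%E) :
  mu (symdiff (H_set f E r) (f @^-1` H_set f E r)) = 0%E.
Proof.
have pre : forall A, measurable A -> measurable (f @^-1` A).
  by move=> A mA; rewrite -[f @^-1` A]setTI; exact: f_meas.
have iter_meas : forall k A, measurable A -> measurable ((iter k f) @^-1` A).
  elim=> [|k IH] A mA //=.
  by rewrite (_ : _ @^-1` _ = iter k f @^-1` (f @^-1` A)) //; apply: IH; apply: pre.
set H := H_set f E r.
have mH : measurable H.
  apply: bigcap_measurableType => m _; apply: bigcup_measurable => n _.
  rewrite /hit_count.
  apply: (@count_meas _ _ _ (fun k => iter k f @^-1` E n)) => k.
  rewrite mem_index_iota => /andP[k1 kn].
  apply: iter_meas; apply: E_meas; exact: leq_trans k1 kn.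
have mfH := pre _ mH.
have key : forall N, (1 <= N)%N -> H `\` f @^-1` H `<=` f @^-1` E N.
  move=> N N1 x [xH nfxH]; apply: contrapT => fxN; apply: nfxH.
  move=> m m1.
  have [n /= nm hn] := xH (maxn m N) (leq_trans m1 (leq_maxl _ _)).
  exists n; first by rewrite /= (leq_trans (leq_maxl _ _) nm).
  have Nn : (N <= n)%N by rewrite (leq_trans (leq_maxr _ _) nm).
  have n1 : (1 <= n)%N by apply: leq_trans N1 Nn.
  apply: (leq_trans hn); rewrite /hit_count.
  rewrite big_nat_recl // big_nat_recr //=.
  have -> : asbool (E n (f x)) = false.
    by apply/asboolP => h; apply: fxN; exact: (E_decr n N N1 Nn _ h).
  rewrite add0n; apply: leq_trans (leq_addr _ _).
  by apply: leq_sum => i _; rewrite -iterSr.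
have mA : measurable (H `\` f @^-1` H) by apply: measurableD.
have A0 : mu (H `\` f @^-1` H) = 0%E.
  apply/le_anti; rewrite measure_ge0 andbT.
  have -> : 0%E = lim ((fun n => mu (E n)) @ \oo) by apply/esym/cvg_lim.
  apply: lime_ge; first by apply/cvg_ex; eexists; exact: E_lim.
  near=> N.
  have N1 : (1 <= N)%N by near: N; exists 1%N.
  rewrite -(f_pres (E N)); last exact: E_meas N N1.
  apply: le_measure; rewrite ?inE //. all: try exact: key. apply: pre; exact: E_meas N N1.
have mB : measurable (f @^-1` H `\` H) by apply: measurableD.
have B0 : mu (f @^-1` H `\` H) = 0%E.
  have h1 : mu H = mu (H `&` f @^-1` H).
    transitivity (mu (H `\` f @^-1` H) + mu (H `&` f @^-1` H))%E; first exact: measureDI.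
    by rewrite A0 add0e.
  have h2 : mu (f @^-1` H) = (mu (f @^-1` H `\` H) + mu (f @^-1` H `&` H))%E by exact: measureDI.
  rewrite f_pres // h1 setIC in h2.
  have fin : (mu (f @^-1` H `&` H)) \is a fin_num by rewrite fin_num_measure //; exact: measurableI.
  have e2 := congr1 (fun z => (z - mu (f @^-1` H `&` H))%E) h2.
  move: e2 => /=. rewrite addeK // subee // => ->.
apply/le_anti; rewrite measure_ge0 andbT.
have hU : (mu (H `\` f @^-1` H `|` f @^-1` H `\` H) <= mu (H `\` f @^-1` H) + mu (f @^-1` H `\` H))%E by exact: measureU2.
by rewrite /symdiff (le_trans hU) // A0 B0 adde0.
Unshelve. all: by end_near.
Qed.
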